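(* Let $n\ge2$ and let $Q=\begin{pmatrix} M & m\\ m^\top&\mu\end{pmatrix}\in\mathcal{S}^n$ with $M\in\mathcal{S}^{n-1}$, $m\in\mathbb{R}^{n-1}$, $\mu\in\mathbb{R}$, and define its lift $\widetilde Q=\begin{pmatrix} M&m&m\\ m^\top&\mu&\mu\\ m^\top&\mu&\mu\end{pmatrix}\in\mathcal{S}^{n+1}$. If $Q\in(\mathcal{S}^n_{\ge0}+\mathcal{N}^n)\setminus(\mathcal{S}^n_{\ge0}\cup\mathcal{N}^n)$, then $\widetilde Q\in(\mathcal{S}^{n+1}_{\ge0}+\mathcal{N}^{n+1})\setminus(\mathcal{S}^{n+1}_{\ge0}\cup\mathcal{N}^{n+1})$. If $Q\in\mathcal{COP}^n\setminus(\mathcal{S}^n_{\ge0}+\mathcal{N}^n)$, then $\widetilde Q\in\mathcal{COP}^{n+1}\setminus(\mathcal{S}^{n+1}_{\ge0}+\mathcal{N}^{n+1})$.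
   Context: $\mathcal{S}^n$: real symmetric $n\times n$ matrices; $\mathcal{S}^n_{\ge0}$: positive semidefinite ones; $\mathcal{N}^n$: symmetric $n\times n$ matrices with all entries nonnegative; $\mathcal{COP}^n=\{B\in\mathcal{S}^n: x^\top Bx\ge0\ \forall x\in\mathbb{R}^n_{\ge0}\}$. *)

(* Defs.v *)
From mathcomp Require Import all_boot all_order all_algebra.
From mathcomp Require Import reals.
Set Implicit Arguments. Unset Strict Implicit. Unset Printing Implicit Defensive.
Import Order.TTheory GRing.Theory Num.Theory.
Local Open Scope ring_scope.

Section Cones.
Variable R : realType.

Definition symmetric_mx n (A : 'M[R]_n) : Prop := A^T = A.

Definition qform n (A : 'M[R]_n) (x : 'cV[R]_n) : R := (x^T *m A *m x) 0 0.

Definition psd n (A : 'M[R]_n) : Prop :=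
  symmetric_mx A /\ forall x : 'cV[R]_n, 0 <= qform A x.

Definition nonneg_mx n (A : 'M[R]_n) : Prop :=
  symmetric_mx A /\ forall i j, 0 <= A i j.

Definition spn n (A : 'M[R]_n) : Prop :=
  exists P N : 'M[R]_n, psd P /\ nonneg_mx N /\ A = P + N.

Definition copositive n (A : 'M[R]_n) : Prop :=
  symmetric_mx A /\
  forall x : 'cV[R]_n, (forall i, 0 <= x i 0) -> 0 <= qform A x.

End Cones.

Definition lift_idx k (i : 'I_k.+2) : 'I_k.+1 := inord (minn i k).

(* the lift  Q~ = [[M,m,m],[m^T,mu,mu],[m^T,mu,mu]]  of Q = [[M,m],[m^T,mu]]:
   the last row and column of Q are duplicated *)
Definition lift_mx (R : Type) k (Q : 'M[R]_k.+1) : 'M[R]_k.+2 :=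
  \matrix_(i, j) Q (lift_idx i) (lift_idx j).

(* Main.v *)
Require Import Defs.
From mathcomp Require Import all_boot all_order all_algebra.
From mathcomp Require Import reals.
Set Implicit Arguments. Unset Strict Implicit. Unset Printing Implicit Defensive.
Import Order.TTheory GRing.Theory Num.Theory.
Local Open Scope ring_scope.

Section S.
Variable R : realType.

Definition reidx m n (f : 'I_n -> 'I_m) (A : 'M[R]_m) : 'M[R]_n :=
  \matrix_(i, j) A (f i) (f j).
Definition sel m n (f : 'I_n -> 'I_m) : 'M[R]_(m, n) :=
  \matrix_(a, j) (a == f j)%:R.

Lemma sum_sel m (F : 'I_m -> R) x :
  \sum_a F a * (a == x)%:R = F x.
Proof.
rewrite (bigD1 x) //= eqxx mulr1 big1 ?addr0 // => a /negbTE ->.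
by rewrite mulr0.
Qed.

Lemma reidxE m n (f : 'I_n -> 'I_m) A :
  reidx f A = (sel f)^T *m A *m sel f.
Proof.
apply/matrixP => i j; rewrite /sel !mxE.
rewrite (eq_bigr (fun b => A (f i) b * (b == f j)%:R)); first by rewrite sum_sel.
move=> b _; rewrite !mxE; congr (_ * _).
rewrite (eq_bigr (fun a => A a b * (a == f i)%:R)) ?sum_sel //.
by move=> a _; rewrite !mxE mulrC.
Qed.

Lemma qform_reidx m n (f : 'I_n -> 'I_m) A x :
  qform (reidx f A) x = qform A (sel f *m x).
Proof. by rewrite /qform reidxE trmx_mul !mulmxA. Qed.

Lemma sym_reidx m n (f : 'I_n -> 'I_m) A :
  symmetric_mx A -> symmetric_mx (reidx f A).
Proof.
move=> hA; apply/matrixP => i j; rewrite !mxE.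
by rewrite -{1}hA mxE.
Qed.

Lemma psd_reidx m n (f : 'I_n -> 'I_m) A : psd A -> psd (reidx f A).
Proof.
by case=> hs hq; split; [apply: sym_reidx | move=> x; rewrite qform_reidx].
Qed.

Lemma nonneg_reidx m n (f : 'I_n -> 'I_m) A :
  nonneg_mx A -> nonneg_mx (reidx f A).
Proof.
by case=> hs hq; split; [apply: sym_reidx | move=> i j; rewrite mxE].
Qed.

Lemma cop_reidx m n (f : 'I_n -> 'I_m) A :
  copositive A -> copositive (reidx f A).
Proof.
case=> hs hq; split; first by apply: sym_reidx.
move=> x hx; rewrite qform_reidx; apply: hq => i; rewrite mxE.
apply: sumr_ge0 => j _; rewrite mxE; apply: mulr_ge0 => //; case: (i == f j) => //=.
Qed.

Lemma spn_reidx m n (f : 'I_n -> 'I_m) A : spn A -> spn (reidx f A).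
Proof.
case=> P [N [hP [hN ->]]]; exists (reidx f P), (reidx f N).
split; first exact: psd_reidx.
split; first exact: nonneg_reidx.
by apply/matrixP => i j; rewrite !mxE.
Qed.
End S.

Lemma lift_reidx (R : realType) k (Q : 'M[R]_k.+1) :
  lift_mx Q = reidx (@lift_idx k) Q.
Proof. by []. Qed.

Lemma restr_lift (R : realType) k (Q : 'M[R]_k.+1) :
  Q = reidx (widen_ord (leqnSn k.+1)) (lift_mx Q).
Proof.
have h : forall i : 'I_k.+1, lift_idx (widen_ord (leqnSn k.+1) i) = i.
  move=> i; apply/val_inj; rewrite /lift_idx /= inordK.
    by apply/minn_idPl; rewrite -ltnS.
  by rewrite ltnS geq_minr.
by apply/matrixP => i j; rewrite !mxE !h.
Qed.

Theorem lemma5p5 (R : realType) (k : nat) (hk : (1 <= k)%N) (Q : 'M[R]_k.+1)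
  (hQ : symmetric_mx Q) :
  ((spn Q /\ ~ psd Q /\ ~ nonneg_mx Q) ->
     (spn (lift_mx Q) /\ ~ psd (lift_mx Q) /\ ~ nonneg_mx (lift_mx Q)))
  /\
  ((copositive Q /\ ~ spn Q) ->
     (copositive (lift_mx Q) /\ ~ spn (lift_mx Q))).
Proof.
split.
- case=> hs [hp hn]; rewrite lift_reidx; split; first exact: spn_reidx.
  split=> h.
    by apply: hp; rewrite (restr_lift Q) lift_reidx; apply: psd_reidx.
  by apply: hn; rewrite (restr_lift Q) lift_reidx; apply: nonneg_reidx.
- case=> hc hs; rewrite lift_reidx; split; first exact: cop_reidx.
  by move=> h; apply: hs; rewrite (restr_lift Q) lift_reidx; apply: spn_reidx.
Qed.
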